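(* In the group-based tree model described in the context (with arbitrary real edge parameters), let $e$ be an internal edge of $\mathscr{T}$ with endpoints $\nu$ and $\nu'$. Choose leaves $i,j$ such that the path between $i$ and $j$ contains $\nu$ but not $\nu'$, and leaves $i',j'$ such that the path between $i'$ and $j'$ contains $\nu'$ but not $\nu$. For $a,b,c,d\in G$ let $z(a,b,c,d)\in G^m$ assign $a,b,c,d$ to leaves $i,j,i',j'$ respectively and $0$ to all other leaves. Then for every $h\in G$ the denominator below is nonzero and $$\big[\check f^{(e)}(h)\big]^2=\frac{q_{z(h,0,-h,0)}\;q_{z(0,-h,0,h)}}{q_{z(h,-h,0,0)}\;q_{z(0,0,-h,h)}}.$$
   Context: Group-based model on a tree. $G$ is a finite abelian group written additively with identity $0$; fix $G\cong\prod_k\mathbb{Z}_{n_k}$ and for $g,h\in G$ put $\hat g(h)=\prod_k\exp(2\pi i\,g_kh_k/n_k)$. The Fourier transform of $a:G\to\mathbb{C}$ is $\check a(g)=\sum_{h\in G}\hat g(h)a(h)$. $\mathscr{T}$ is a finite tree with $m$ leaves, one of which is designated the root leaf $r$. Each edge $e$ carries a function $\psi^{(e)}:G\to\mathbb{R}$ with $\sum_g\psi^{(e)}(g)=0$ and $\psi^{(e)}(g)=\psi^{(e)}(-g)$ (its values at $g\ne0$ are the edge parameters of $e$); put $Q^{(e)}_{g,h}=\psi^{(e)}(h-g)$, $P^{(e)}=\exp(Q^{(e)})$, $f^{(e)}(h)=P^{(e)}_{0,h}$, so $P^{(e)}_{g,h}=f^{(e)}(h-g)$. Edges are directed away from $r$.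 For $\mathbf g\in G^{m}$ (indexed by all leaves, $r$ included), $p_{\mathbf g}=\sum_\sigma\prod_{e=(u\to v)}P^{(e)}_{\sigma(u),\sigma(v)}$, the sum over all maps $\sigma$ from vertices to $G$ with $\sigma(r)=0$ and $\sigma$ equal to $\mathbf g$ on the leaves. The Fourier transform is $q_{\mathbf g}=\sum_{\mathbf h\in G^m}\prod_{x}\hat g_x(h_x)\,p_{\mathbf h}$. For an edge $e$, $\Lambda(e)$ is the set of leaves whose path to $r$ contains $e$, and ${}^*g_e=\sum_{x\in\Lambda(e)}g_x$. It is a known fact (Hendy; Evans–Speed) that $q_{\mathbf g}=\prod_{e}\check f^{(e)}({}^*g_e)$ for all $\mathbf g\in G^m$. An internal edge is one neither of whose endpoints is a leaf. *)

(* Defs.v *)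
From Stdlib Require Import Reals.
From mathcomp Require Import all_boot all_algebra.
Set Implicit Arguments. Unset Strict Implicit. Unset Printing Implicit Defensive.

Definition C := (R * R)%type.
Definition C0 : C := (R0, R0).
Definition C1 : C := (R1, R0).
Definition Cadd (x y : C) : C := (Rplus x.1 y.1, Rplus x.2 y.2).
Definition Cmul (x y : C) : C :=
  (Rminus (Rmult x.1 y.1) (Rmult x.2 y.2), Rplus (Rmult x.1 y.2) (Rmult x.2 y.1)).
Definition Cinv (x : C) : C :=
  let d := Rplus (Rmult x.1 x.1) (Rmult x.2 x.2) in
  (Rdiv x.1 d, Ropp (Rdiv x.2 d)).
Definition Cdiv (x y : C) : C := Cmul x (Cinv y).
Definition RtoC (a : R) : C := (a, R0).
Definition cis (t : R) : C := (cos t, sin t).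

(* The group G = prod_k Z_{n_k}, with n_k = (nn k).+1 >= 1.           *)
Definition grp (K : nat) (nn : 'I_K -> nat) : finType :=
  {dffun forall k : 'I_K, 'I_(nn k).+1}.

Section Group.
Variables (K : nat) (nn : 'I_K -> nat).
Local Notation G := (grp nn).

Definition g0 : G := [ffun k => (0%R : 'I_(nn k).+1)].
Definition gadd (g h : G) : G := [ffun k => (g k + h k)%R].
Definition gopp (g : G) : G := [ffun k => (- g k)%R].
Definition gsub (g h : G) : G := gadd g (gopp h).

Definition chr (g h : G) : C :=
  \big[Cmul/C1]_(k : 'I_K)
     cis (Rdiv (Rmult (Rmult (Rmult (INR 2) PI) (INR (g k))) (INR (h k)))
               (INR (nn k).+1)).

Definition fourier (a : G -> R) (g : G) : C :=
  \big[Cadd/C0]_(h : G) Cmul (chr g h) (RtoC (a h)).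

Fixpoint mpow (Q : G -> G -> R) (k : nat) (g h : G) : R :=
  match k with
  | O => if g == h then R1 else R0
  | S k' => \big[Rplus/R0]_(l : G) Rmult (mpow Q k' g l) (Q l h)
  end.

Definition is_mexp (Q P : G -> G -> R) : Prop :=
  forall g h : G,
    Un_cv (fun N => sum_f_R0 (fun k => Rdiv (mpow Q k g h) (INR (Factorial.fact k))) N)
          (P g h).
End Group.

(* (undirected) edges are {parent v, v} for v <> r; the edge indexed   *)
(* by v is directed parent v -> v (away from r).                       *)
Section Tree.
Variables (V : finType) (r : V) (par : V -> V).

Definition is_rooted_tree : Prop :=
  par r = r /\ forall v : V, exists k : nat, iter k par v = r.

Definition children (u : V) : {set V} := [set c | (c != r) && (par c == u)].
Definition degree (u : V) : nat := (u != r) + #|children u|.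
Definition is_leaf (u : V) : bool := degree u == 1.

Definition Leaf : finType := {x : V | is_leaf x}.

Definition adj : rel V :=
  fun u w => ((u != r) && (par u == w)) || ((w != r) && (par w == u)).

Definition on_path (x y w : V) : Prop :=
  exists s : seq V, [/\ path adj x s, last x s = y, uniq (x :: s) & w \in x :: s].

Definition internal_edge (v : V) : bool :=
  [&& v != r, ~~ is_leaf v & ~~ is_leaf (par v)].
End Tree.

Section Model.
Variables (K : nat) (nn : 'I_K -> nat) (V : finType) (r : V) (par : V -> V).
Local Notation G := (grp nn).
Local Notation Lf := (Leaf r par).
Variable P : V -> G -> G -> R.   (* P v = transition matrix of edge par v -> v *)

Definition fedge (v : V) (h : G) : R := P v (g0 nn) h.

Definition pprob (g : {ffun Lf -> G}) : R :=
  \big[Rplus/R0]_(s : {ffun V -> G} |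
                  (s r == g0 nn) && [forall x : Lf, s (val x) == g x])
     \big[Rmult/R1]_(v : V | v != r) P v (s (par v)) (s v).

Definition qF (g : {ffun Lf -> G}) : C :=
  \big[Cadd/C0]_(h : {ffun Lf -> G})
     Cmul (\big[Cmul/C1]_(x : Lf) chr (g x) (h x)) (RtoC (pprob h)).

Definition zvec (i j i' j' : V) (a b c d : G) : {ffun Lf -> G} :=
  [ffun x : Lf => let y := val x in
     if y == i then a else if y == j then b else if y == i' then c
     else if y == j' then d else g0 nn].
End Model.

Arguments pprob {K nn V} r par P g.
Arguments qF {K nn V} r par P g.
Arguments zvec {K nn V} r par i j i' j' a b c d.
Arguments fedge {K nn V} P v h.

(* Main.v *)
Require Import Defs.
From Stdlib Require Import Reals Lra.
From HB Require Import structures.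
From mathcomp Require Import all_boot all_algebra.
Set Implicit Arguments. Unset Strict Implicit. Unset Printing Implicit Defensive.
Set Warnings "-notation-overridden,-ambiguous-paths,-redundant-canonical-projection".
Notation C := Defs.C.
Notation C0 := Defs.C0.
Notation C1 := Defs.C1.

Lemma Rplus_0_l' : left_id R0 Rplus. Proof. by move=> x; rewrite Rplus_0_l. Qed.
Lemma Rmult_1_l' : left_id R1 Rmult. Proof. by move=> x; rewrite Rmult_1_l. Qed.
Lemma Rplus_assoc' : associative Rplus. Proof. by move=> x y z; rewrite Rplus_assoc. Qed.
Lemma Rmult_assoc' : associative Rmult. Proof. by move=> x y z; rewrite Rmult_assoc. Qed.
HB.instance Definition _ := Monoid.isComLaw.Build R R0 Rplus Rplus_assoc' Rplus_comm Rplus_0_l'.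
HB.instance Definition _ := Monoid.isComLaw.Build R R1 Rmult Rmult_assoc' Rmult_comm Rmult_1_l'.
Lemma Rmult_0_l' : left_zero R0 Rmult. Proof. by move=> x; rewrite Rmult_0_l. Qed.
Lemma Rmult_0_r' : right_zero R0 Rmult. Proof. by move=> x; rewrite Rmult_0_r. Qed.
HB.instance Definition _ := Monoid.isMulLaw.Build R R0 Rmult Rmult_0_l' Rmult_0_r'.
Lemma RDl : left_distributive Rmult Rplus. Proof. by move=> x y z; rewrite Rmult_plus_distr_r. Qed.
Lemma RDr : right_distributive Rmult Rplus. Proof. by move=> x y z; rewrite Rmult_plus_distr_l. Qed.
HB.instance Definition _ := Monoid.isAddLaw.Build R Rmult Rplus RDl RDr.

Lemma Cext (x y : Defs.C) : x.1 = y.1 -> x.2 = y.2 -> x = y.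
Proof. by case: x y => a b [c d] /= -> ->. Qed.
Ltac Csolve := intros; repeat (hnf; intros); apply: Cext; rewrite /Cadd /Cmul /C0 /C1 /=; ring.
Lemma CaddA : associative Cadd. Proof. Csolve. Qed.
Lemma CaddC : commutative Cadd. Proof. Csolve. Qed.
Lemma Cadd0 : left_id C0 Cadd. Proof. Csolve. Qed.
Lemma CmulA : associative Cmul. Proof. Csolve. Qed.
Lemma CmulC : commutative Cmul. Proof. Csolve. Qed.
Lemma Cmul1 : left_id C1 Cmul. Proof. Csolve. Qed.
Lemma Cmul0l : left_zero C0 Cmul. Proof. Csolve. Qed.
Lemma Cmul0r : right_zero C0 Cmul. Proof. Csolve. Qed.
Lemma CDl : left_distributive Cmul Cadd. Proof. Csolve. Qed.
Lemma CDr : right_distributive Cmul Cadd. Proof. Csolve. Qed.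
HB.instance Definition _ := Monoid.isComLaw.Build Defs.C C0 Cadd CaddA CaddC Cadd0.
HB.instance Definition _ := Monoid.isComLaw.Build Defs.C C1 Cmul CmulA CmulC Cmul1.
HB.instance Definition _ := Monoid.isMulLaw.Build Defs.C C0 Cmul Cmul0l Cmul0r.
HB.instance Definition _ := Monoid.isAddLaw.Build Defs.C Cmul Cadd CDl CDr.

Lemma RtoC_add a b : RtoC (Rplus a b) = Cadd (RtoC a) (RtoC b).
Proof. Csolve. Qed.
Lemma RtoC_mul a b : RtoC (Rmult a b) = Cmul (RtoC a) (RtoC b).
Proof. Csolve. Qed.
Lemma RtoC_sum (I : finType) (P : pred I) (F : I -> R) :
  RtoC (\big[Rplus/R0]_(i | P i) F i) = \big[Cadd/C0]_(i | P i) RtoC (F i).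
Proof. by apply: (big_morph RtoC RtoC_add). Qed.
Lemma RtoC_prod (I : finType) (P : pred I) (F : I -> R) :
  RtoC (\big[Rmult/R1]_(i | P i) F i) = \big[Cmul/C1]_(i | P i) RtoC (F i).
Proof. by apply: (big_morph RtoC RtoC_mul). Qed.

Definition Cconj (x : C) : C := (x.1, Ropp x.2).
Lemma Cconj_add a b : Cconj (Cadd a b) = Cadd (Cconj a) (Cconj b).
Proof. rewrite /Cconj; Csolve. Qed.
Lemma Cconj_mul a b : Cconj (Cmul a b) = Cmul (Cconj a) (Cconj b).
Proof. rewrite /Cconj; Csolve. Qed.

Section GroupLemmas.
Variables (K : nat) (nn : 'I_K -> nat).
Local Notation G := (grp nn).
Implicit Types x y z : G.

Lemma gaddC : commutative (@gadd K nn).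
Proof. by move=> x y; apply/ffunP => k; rewrite !ffunE GRing.addrC. Qed.
Lemma gaddA : associative (@gadd K nn).
Proof. by move=> x y z; apply/ffunP => k; rewrite !ffunE GRing.addrA. Qed.
Lemma gadd0g : left_id (g0 nn) (@gadd K nn).
Proof. by move=> x; apply/ffunP => k; rewrite !ffunE GRing.add0r. Qed.
Lemma gaddg0 x : gadd x (g0 nn) = x.
Proof. by rewrite gaddC gadd0g. Qed.
Lemma gaddN x : gadd x (gopp x) = g0 nn.
Proof. by apply/ffunP => k; rewrite !ffunE GRing.subrr. Qed.
Lemma gaddNg x : gadd (gopp x) x = g0 nn.
Proof. by rewrite gaddC gaddN. Qed.
Lemma goppK x : gopp (gopp x) = x.
Proof. by apply/ffunP => k; rewrite !ffunE GRing.opprK. Qed.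
Lemma gopp0 : gopp (g0 nn) = g0 nn.
Proof. by apply/ffunP => k; rewrite !ffunE GRing.oppr0. Qed.
Lemma goppD x y : gopp (gadd x y) = gadd (gopp x) (gopp y).
Proof. by apply/ffunP => k; rewrite !ffunE GRing.opprD. Qed.
Lemma gaddKr x y : gsub (gadd x y) y = x.
Proof. by rewrite /gsub -gaddA gaddN gaddg0. Qed.
Lemma gsubK x y : gadd (gsub x y) y = x.
Proof. by rewrite /gsub -gaddA gaddNg gaddg0. Qed.
Lemma gsubxx x : gsub x x = g0 nn.
Proof. exact: gaddN. Qed.
Lemma gsub0 x : gsub x (g0 nn) = x.
Proof. by rewrite /gsub gopp0 gaddg0. Qed.
Lemma gadd_inj y : injective (fun x => gadd x y).
Proof. by move=> a b /= H; rewrite -(gaddKr a y) H gaddKr. Qed.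
Lemma gopp_inj : injective (@gopp K nn).
Proof. by move=> a b H; rewrite -(goppK a) H goppK. Qed.
Lemma gsub_eq0 x y : (gsub x y == g0 nn) = (x == y).
Proof.
apply/eqP/eqP => [H|->]; last exact: gsubxx.
by rewrite -(gsubK x y) H gadd0g.
Qed.
End GroupLemmas.

HB.instance Definition _ (K : nat) (nn : 'I_K -> nat) :=
  Monoid.isComLaw.Build (grp nn) (g0 nn) (@gadd K nn) (@gaddA K nn) (@gaddC K nn) (@gadd0g K nn).

Definition ang (n a b : nat) : R :=
  Rdiv (Rmult (Rmult (Rmult (INR 2) PI) (INR a)) (INR b)) (INR n.+1).

Lemma cis_add s t : cis (Rplus s t) = Cmul (cis s) (cis t).
Proof. apply: Cext; rewrite /cis /Cmul /= ?cos_plus ?sin_plus; ring. Qed.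
Lemma cis0 : cis R0 = C1.
Proof. by rewrite /cis cos_0 sin_0. Qed.
Lemma cis_period t k : cis (Rplus t (Rmult (Rmult 2 (INR k)) PI)) = cis t.
Proof. by rewrite /cis cos_period sin_period. Qed.
Lemma cis_neg t : cis (Ropp t) = Cconj (cis t).
Proof. by rewrite /cis /Cconj cos_neg sin_neg. Qed.

Lemma INR_n1_neq0 n : INR n.+1 <> R0.
Proof. by apply: not_0_INR. Qed.

Lemma ang_addr n a x y : ang n a (x + y) = Rplus (ang n a x) (ang n a y).
Proof. rewrite /ang plus_INR; field; exact: INR_n1_neq0. Qed.

Lemma ang_mulm n a q : ang n a (q * n.+1) = Rmult (Rmult 2 (INR (a * q))) PI.
Proof.
rewrite /ang !mult_INR; have H := @INR_n1_neq0 n; simpl (INR 2).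
field; exact: H.
Qed.

Lemma cis_mod n a u : cis (ang n a (u %% n.+1)) = cis (ang n a u).
Proof.
by rewrite {2}(divn_eq u n.+1) addnC ang_addr ang_mulm cis_period.
Qed.

Lemma ang_sym n a b : ang n a b = ang n b a.
Proof. rewrite /ang; field; exact: INR_n1_neq0. Qed.

Lemma Cconj_C1 : Cconj C1 = C1.
Proof. by rewrite /Cconj /= Ropp_0. Qed.

Section Chr.
Variables (K : nat) (nn : 'I_K -> nat).
Local Notation G := (grp nn).
Implicit Types x y z g h : G.

Lemma chrE g h : chr g h = \big[Cmul/C1]_(k : 'I_K) cis (ang (nn k) (g k) (h k)).
Proof. by []. Qed.

Lemma chr_sym g h : chr g h = chr h g.
Proof. by rewrite !chrE; apply: eq_bigr => k _; rewrite ang_sym. Qed.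

Lemma chr_addr g x y : chr g (gadd x y) = Cmul (chr g x) (chr g y).
Proof.
rewrite !chrE -big_split /=; apply: eq_bigr => k _.
by rewrite ffunE /= cis_mod ang_addr cis_add.
Qed.

Lemma chr_addl g x y : chr (gadd x y) g = Cmul (chr x g) (chr y g).
Proof. by rewrite !(chr_sym _ g) chr_addr. Qed.

Lemma chr_0r g : chr g (g0 nn) = C1.
Proof.
rewrite chrE big1 // => k _; rewrite ffunE /ang /= Rmult_0_r /Rdiv Rmult_0_l.
exact: cis0.
Qed.

Lemma chr_0l g : chr (g0 nn) g = C1.
Proof. by rewrite chr_sym chr_0r. Qed.

Lemma chr_oppr s g : chr s (gopp g) = Cconj (chr s g).
Proof.
rewrite !chrE (big_morph Cconj Cconj_mul Cconj_C1); apply: eq_bigr => k _.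
rewrite ffunE /= cis_mod -cis_neg.
have Hle : (g k <= (nn k).+1)%N by apply: ltnW.
have -> : ang (nn k) (s k) ((nn k).+1 - g k) =
   Rplus (Ropp (ang (nn k) (s k) (g k))) (Rmult (Rmult 2 (INR (s k))) PI).
  rewrite /ang minus_INR; last by apply/leP.
  simpl (INR 2).
  field; apply: INR_n1_neq0.
by rewrite cis_period.
Qed.

Lemma chr_oppl s g : chr (gopp s) g = Cconj (chr g s).
Proof. by rewrite chr_sym chr_oppr. Qed.

Lemma chr_big (I : finType) (P : pred I) (F : I -> G) g :
  chr g (\big[@gadd K nn/g0 nn]_(i | P i) F i) = \big[Cmul/C1]_(i | P i) chr g (F i).
Proof. by apply: (big_morph (chr g) (chr_addr g) (chr_0r g)). Qed.

Lemma chr_bigl (I : finType) (P : pred I) (F : I -> G) g :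
  chr (\big[@gadd K nn/g0 nn]_(i | P i) F i) g = \big[Cmul/C1]_(i | P i) chr (F i) g.
Proof. by apply: (big_morph (fun x => chr x g) (fun x y => chr_addl g x y) (chr_0l g)). Qed.
End Chr.

Lemma Un_cv_ext (a b : nat -> R) l : (forall n, a n = b n) -> Un_cv a l -> Un_cv b l.
Proof.
move=> E H eps Heps; case: (H eps Heps) => N HN; exists N => n Hn.
by rewrite -E; apply: HN.
Qed.

Lemma Un_cv_const c : Un_cv (fun _ => c) c.
Proof.
move=> eps Heps; exists 0%N => n _; rewrite /Rdist Rminus_diag Rabs_R0; exact: Heps.
Qed.

Lemma cv_bigseq (I : Type) (s : seq I) (u : I -> nat -> R) (l : I -> R) :
  (forall i, Un_cv (u i) (l i)) ->
  Un_cv (fun N => \big[Rplus/R0]_(i <- s) u i N) (\big[Rplus/R0]_(i <- s) l i).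
Proof.
move=> H; elim: s => [|a s IH].
  rewrite big_nil; apply: (Un_cv_ext (a := fun _ => R0)); last exact: Un_cv_const.
  by move=> n; rewrite big_nil.
rewrite big_cons; apply: (Un_cv_ext (a := fun N => Rplus (u a N) (\big[Rplus/R0]_(i <- s) u i N))).
  by move=> n; rewrite big_cons.
exact: CV_plus.
Qed.

Lemma cv_big (I : finType) (u : I -> nat -> R) (l : I -> R) :
  (forall i, Un_cv (u i) (l i)) ->
  Un_cv (fun N => \big[Rplus/R0]_(i : I) u i N) (\big[Rplus/R0]_(i : I) l i).
Proof. exact: cv_bigseq. Qed.

Lemma sum_f_big (I : finType) (F : I -> nat -> R) N :
  sum_f_R0 (fun k => \big[Rplus/R0]_(i : I) F i k) N =
  \big[Rplus/R0]_(i : I) sum_f_R0 (F i) N.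
Proof.
elim: N => [|N IH] //=; by rewrite IH -big_split.
Qed.

Lemma Cfst_sum (I : finType) (F : I -> C) :
  (\big[Cadd/C0]_(i : I) F i).1 = \big[Rplus/R0]_(i : I) (F i).1.
Proof. by apply: (big_morph fst) => //. Qed.
Lemma Csnd_sum (I : finType) (F : I -> C) :
  (\big[Cadd/C0]_(i : I) F i).2 = \big[Rplus/R0]_(i : I) (F i).2.
Proof. by apply: (big_morph snd) => //. Qed.

Lemma Cconj_sum (I : finType) (F : I -> C) :
  Cconj (\big[Cadd/C0]_(i : I) F i) = \big[Cadd/C0]_(i : I) Cconj (F i).
Proof. apply: (big_morph Cconj Cconj_add); by rewrite /Cconj /= Ropp_0. Qed.

Section Expo.
Variables (K : nat) (nn : 'I_K -> nat).
Local Notation G := (grp nn).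
Variable psi : G -> R.
Hypothesis Hsum : \big[Rplus/R0]_(g : G) psi g = R0.
Hypothesis Hsym : forall g, psi g = psi (gopp g).
Local Notation Q := (fun g h : G => psi (gsub h g)).
Variable P : G -> G -> R.
Hypothesis HP : is_mexp Q P.

Lemma gsub_addr (h l g : G) : gsub h (gadd l g) = gsub (gsub h g) l.
Proof. by rewrite /gsub goppD (gaddC (gopp l)) gaddA. Qed.

Lemma mpow_shift k (g h : G) : mpow Q k g h = mpow Q k (g0 nn) (gsub h g).
Proof.
elim: k h => [|k IH] h /=.
  by rewrite [g0 nn == _]eq_sym gsub_eq0 eq_sym.
rewrite (reindex_inj (@gadd_inj _ _ g)) /=; apply: eq_bigr => l _.
by rewrite IH gaddKr gsub_addr.
Qed.

Lemma P_shift (g h : G) : P g h = P (g0 nn) (gsub h g).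
Proof.
apply: (UL_sequence _ _ _ (HP g h)).
apply: (Un_cv_ext _ (HP (g0 nn) (gsub h g))) => N.
apply: PartSum.sum_eq => i _; by rewrite [in RHS]mpow_shift.
Qed.

Definition Lam (s : G) : C := \big[Cadd/C0]_(g : G) Cmul (chr s g) (RtoC (psi g)).
Definition lam (s : G) : R := (Lam s).1.

Lemma Lam_conj s : Cconj (Lam s) = Lam s.
Proof.
rewrite /Lam Cconj_sum [in RHS](reindex_inj (@gopp_inj K nn)) /=.
apply: eq_bigr => g _; rewrite chr_oppr -Hsym Cconj_mul; congr Cmul.
by rewrite /Cconj /RtoC /= Ropp_0.
Qed.

Lemma Lam_real s : Lam s = RtoC (lam s).
Proof.
have H := Lam_conj s; rewrite /lam /RtoC; apply: Cext => //=.
have : (Cconj (Lam s)).2 = (Lam s).2 by rewrite H.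
rewrite /Cconj /=; lra.
Qed.

Lemma mpow_eig s k :
  \big[Cadd/C0]_(h : G) Cmul (chr s h) (RtoC (mpow Q k (g0 nn) h)) = RtoC (lam s ^ k).
Proof.
elim: k => [|k IH] /=.
  rewrite (bigD1 (g0 nn)) //= eqxx chr_0r big1 => [|h /negPf]; last first.
    by rewrite eq_sym => ->; Csolve.
  Csolve.
have E : forall h, Cmul (chr s h)
     (RtoC (\big[Rplus/R0]_(l : G) Rmult (mpow Q k (g0 nn) l) (psi (gsub h l)))) =
   \big[Cadd/C0]_(l : G) Cmul (RtoC (mpow Q k (g0 nn) l)) (Cmul (chr s h) (RtoC (psi (gsub h l)))).
  move=> h; rewrite RtoC_sum big_distrr /=; apply: eq_bigr => l _; rewrite RtoC_mul; Csolve.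
rewrite (eq_bigr _ (fun h _ => E h)) exchange_big /=.
have E2 : forall l, \big[Cadd/C0]_(h : G) Cmul (chr s h) (RtoC (psi (gsub h l))) =
   Cmul (chr s l) (RtoC (lam s)).
  move=> l; rewrite -Lam_real /Lam big_distrr (reindex_inj (@gadd_inj _ _ l)) /=.
  by apply: eq_bigr => h _; rewrite gaddKr chr_addr; Csolve.
rewrite (eq_bigr (fun l => Cmul (Cmul (chr s l) (RtoC (mpow Q k (g0 nn) l))) (RtoC (lam s)))).
  by rewrite -big_distrl /= IH -RtoC_mul Rmult_comm.
by move=> l _; rewrite -big_distrr /= E2; Csolve.
Qed.

Lemma cv_coef (d : G -> R) :
  Un_cv (fun N => sum_f_R0 (fun k => Rdiv (\big[Rplus/R0]_(h : G) Rmult (d h) (mpow Q k (g0 nn) h))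
                                         (INR (Factorial.fact k))) N)
        (\big[Rplus/R0]_(h : G) Rmult (d h) (P (g0 nn) h)).
Proof.
apply: (Un_cv_ext (a := fun N => \big[Rplus/R0]_(h : G) Rmult (d h)
   (sum_f_R0 (fun k => Rdiv (mpow Q k (g0 nn) h) (INR (Factorial.fact k))) N))).
  move=> N.
  rewrite (PartSum.sum_eq _ (fun k => \big[Rplus/R0]_(h : G) Rmult (d h)
     (Rdiv (mpow Q k (g0 nn) h) (INR (Factorial.fact k))))); last first.
    move=> i _; rewrite /Rdiv big_distrl /=; apply: eq_bigr => h _; ring.
  rewrite sum_f_big; apply: eq_bigr => h _.
  elim: N => [|N IH]; first by [].
  rewrite !tech5 -IH; ring.
apply: cv_big => h; apply: (CV_mult (fun _ => d h)); first exact: Un_cv_const.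
exact: HP.
Qed.
Lemma exp_cv x : Un_cv (sum_f_R0 (fun i => Rmult (Rinv (INR (Factorial.fact i))) (pow x i))) (exp x).
Proof. rewrite /exp; case: (exist_exp x) => l Hl /=; exact: Hl. Qed.

Lemma fourier_P s : fourier (fun h => P (g0 nn) h) s = RtoC (exp (lam s)).
Proof.
have E1 : forall k, \big[Rplus/R0]_(h : G) Rmult (chr s h).1 (mpow Q k (g0 nn) h) = pow (lam s) k.
  move=> k; rewrite -[RHS]/((RtoC (pow (lam s) k)).1) -(mpow_eig s k) Cfst_sum.
  apply: eq_bigr => h _; rewrite /Cmul /RtoC /=; ring.
have E2 : forall k, \big[Rplus/R0]_(h : G) Rmult (chr s h).2 (mpow Q k (g0 nn) h) = R0.
  move=> k; rewrite -[RHS]/((RtoC (pow (lam s) k)).2) -(mpow_eig s k) Csnd_sum.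
  apply: eq_bigr => h _; rewrite /Cmul /RtoC /=; ring.
apply: Cext; rewrite /fourier /=.
- rewrite Cfst_sum.
  rewrite (eq_bigr (fun h => Rmult (chr s h).1 (P (g0 nn) h))); last first.
    move=> h _; rewrite /Cmul /RtoC /=; ring.
  apply: (UL_sequence _ _ _ (cv_coef (fun h => (chr s h).1))).
  apply: (Un_cv_ext _ (exp_cv (lam s))) => N.
  apply: PartSum.sum_eq => i _; rewrite E1 /Rdiv; ring.
- rewrite Csnd_sum.
  rewrite (eq_bigr (fun h => Rmult (chr s h).2 (P (g0 nn) h))); last first.
    move=> h _; rewrite /Cmul /RtoC /=; ring.
  apply: (UL_sequence _ _ _ (cv_coef (fun h => (chr s h).2))).
  apply: (Un_cv_ext _ (Un_cv_const R0)) => N.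
  rewrite (PartSum.sum_eq _ (fun _ => R0)); last by move=> i _; rewrite E2 /Rdiv Rmult_0_l.
  by rewrite sum_cte Rmult_0_l.
Qed.

Lemma lam_opp s : lam (gopp s) = lam s.
Proof.
rewrite /lam /Lam (reindex_inj (@gopp_inj K nn)) /=; congr fst; apply: eq_bigr => g _.
rewrite -Hsym chr_oppl chr_oppl; congr Cmul; rewrite /Cconj /=; apply: Cext => //=; ring.
Qed.

Lemma lam0 : lam (g0 nn) = R0.
Proof.
rewrite /lam /Lam Cfst_sum -[in RHS]Hsum; apply: eq_bigr => g _; rewrite chr_0l /Cmul /RtoC /=; ring.
Qed.
End Expo.


Lemma sum_prod_pin (V G : finType) (r : V) (y0 : G) (H : V -> G -> C) :
  \big[Cadd/C0]_(d : {ffun V -> G} | d r == y0) \big[Cmul/C1]_(w | w != r) H w (d w) =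
  \big[Cmul/C1]_(w | w != r) \big[Cadd/C0]_(y : G) H w y.
Proof.
pose H' w y := if w == r then (if y == y0 then C1 else C0) else H w y.
have E1 : \big[Cmul/C1]_(w : V) \big[Cadd/C0]_(y : G) H' w y =
          \big[Cmul/C1]_(w | w != r) \big[Cadd/C0]_(y : G) H w y.
  rewrite [LHS](bigD1 r) //= /H' (eqxx r) (bigD1 y0) //=. rewrite eqxx big1 => [|y /negPf->//].
  rewrite (_ : Cadd C1 C0 = C1); last by Csolve.
  rewrite Monoid.mul1m; apply: eq_bigr => w /negPf Hw; apply: eq_bigr => y _.
  by rewrite Hw.
rewrite -E1 bigA_distr_bigA big_mkcond /=; apply: eq_bigr => d _.
rewrite [RHS](bigD1 r) //= /H' eqxx.
rewrite [in RHS](eq_bigr (fun w => H w (d w))); last by move=> w /negPf Hw; rewrite Hw.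
by case: (d r == y0); Csolve.
Qed.

Section Tree.
Variables (V : finType) (r : V) (par : V -> V).
Hypothesis Hroot : par r = r.
Hypothesis Hreach : forall v : V, exists k : nat, iter k par v = r.

Lemma iter_r j : iter j par r = r.
Proof. by elim: j => //= j ->. Qed.

Lemma fcon_r w : fconnect par r w -> w = r.
Proof. by move/iter_findex <-; rewrite iter_r. Qed.

Lemma fcon_to_r v : fconnect par v r.
Proof. by case: (Hreach v) => k <-; apply: fconnect_iter. Qed.

Lemma fcon_step v w : fconnect par v w = (v == w) || fconnect par (par v) w.
Proof. exact: fconnect_eqVf. Qed.

Lemma iter_mul v n m : iter n.+1 par v = v -> iter (m * n.+1) par v = v.
Proof.
move=> H; elim: m => [|m IH]; first by [].
by rewrite mulSn iterD IH H.
Qed.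

Lemma fcon_par_not v : v != r -> ~~ fconnect par (par v) v.
Proof.
move=> Hv; apply/negP => /iter_findex; set n := findex _ _ _ => H.
have H1 : iter n.+1 par v = v by rewrite iterSr.
case: (Hreach v) => k Hk.
have := iter_mul k H1; rewrite mulnSr iterD Hk iter_r => Hr.
by move/eqP: Hv; apply.
Qed.

Lemma par_neq v : v != r -> par v != v.
Proof.
move=> Hv; apply/eqP => E; have := fcon_par_not Hv; by rewrite E connect0.
Qed.

Lemma fcon_trans u v w : fconnect par u v -> fconnect par v w -> fconnect par u w.
Proof. exact: connect_trans. Qed.

Variables (K : nat) (nn : 'I_K -> nat).
Local Notation G := (grp nn).

Definition tau (d : {ffun V -> G}) : {ffun V -> G} :=
  [ffun v => \big[@gadd K nn/g0 nn]_(w | fconnect par v w && (w != r)) d w].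
Definition dif (s : {ffun V -> G}) : {ffun V -> G} :=
  [ffun v => gsub (s v) (s (par v))].

Lemma tau_r d : tau d r = g0 nn.
Proof.
rewrite ffunE big_pred0 // => w; apply/negP => /andP[/fcon_r -> ]; by rewrite eqxx.
Qed.

Lemma tau_step d v : v != r -> tau d v = gadd (d v) (tau d (par v)).
Proof.
move=> Hv; rewrite !ffunE (bigD1 v) /=; last by rewrite connect0 Hv.
congr gadd; apply: eq_bigl => w; rewrite fcon_step.
case: (eqVneq w v) => [->|Hwv]; first by rewrite (negPf (fcon_par_not Hv)) !andbF.
by rewrite andbT.
Qed.

Lemma dif_tau d v : v != r -> gsub (tau d v) (tau d (par v)) = d v.
Proof. by move=> Hv; rewrite tau_step // gaddKr. Qed.

Lemma tau_dif (s : {ffun V -> G}) : s r = g0 nn -> tau (dif s) = s.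
Proof.
move=> Hs; apply/ffunP => v; case: (Hreach v) => n Hn; elim: n v Hn => [|n IH] v Hn.
  by rewrite /= in Hn; rewrite Hn tau_r Hs.
case: (eqVneq v r) => [->|Hv]; first by rewrite tau_r Hs.
rewrite tau_step // IH; last by rewrite -iterSr.
by rewrite ffunE gsubK.
Qed.

Lemma dif_r (s : {ffun V -> G}) : dif s r = g0 nn.
Proof. by rewrite ffunE Hroot gsubxx. Qed.
Local Notation Lf := (Leaf r par).
Definition Sg (g : {ffun Lf -> G}) (w : V) : G :=
  \big[@gadd K nn/g0 nn]_(x : Lf | fconnect par (val x) w) g x.

Variable P : V -> G -> G -> R.
Hypothesis Pshift : forall v, v != r -> forall a b, P v a b = P v (g0 nn) (gsub b a).

Lemma qF_prod (g : {ffun Lf -> G}) :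
  qF r par P g = \big[Cmul/C1]_(w | w != r) fourier (fedge P w) (Sg g w).
Proof.
have Ea : qF r par P g = \big[Cadd/C0]_(s : {ffun V -> G} | s r == g0 nn)
   Cmul (\big[Cmul/C1]_(x : Lf) chr (g x) (s (val x)))
        (RtoC (\big[Rmult/R1]_(v | v != r) P v (s (par v)) (s v))).
  rewrite [RHS](partition_big (fun s : {ffun V -> G} => [ffun x : Lf => s (val x)]) predT) //=.
  apply: eq_bigr => hL _; rewrite /pprob RtoC_sum big_distrr /=.
  apply: eq_big => s.
    congr andb; apply/forallP/eqP => [H|<- x]; last by rewrite ffunE.
    by apply/ffunP => x; rewrite ffunE; apply/eqP/H.
  move=> /andP[_ /forallP H]; congr Cmul; apply: eq_bigr => x _; by rewrite (eqP (H x)).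
rewrite Ea (reindex_onto tau dif) => [|s /eqP Hs]; last exact: tau_dif.
rewrite (eq_bigl (fun d : {ffun V -> G} => d r == g0 nn)); last first.
  move=> d; rewrite tau_r eqxx /=; apply/eqP/eqP => [<-|Hd]; first exact: dif_r.
  apply/ffunP => v; case: (eqVneq v r) => [->|Hv]; first by rewrite dif_r Hd.
  by rewrite ffunE dif_tau.
rewrite /fourier -(sum_prod_pin r (g0 nn) (fun w y => Cmul (chr (Sg g w) y) (RtoC (fedge P w y)))).
apply: eq_bigr => d Hd; rewrite big_split /=; congr Cmul.
  under eq_bigr do rewrite ffunE chr_big.
  rewrite (exchange_big_dep (fun w => w != r)) /=; last by move=> x w _ /andP[].
  apply: eq_bigr => w Hw; rewrite /Sg chr_bigl; apply: eq_bigl => x.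
  by rewrite Hw andbT.
rewrite RtoC_prod; apply: eq_bigr => v Hv; rewrite Pshift // dif_tau //.
Qed.

End Tree.

Section Paths.
Variables (V : finType) (r : V) (par : V -> V).
Hypothesis Hroot : par r = r.
Hypothesis Hreach : forall v : V, exists k : nat, iter k par v = r.
Local Notation D w x := (fconnect par x w).
Local Notation e := (adj r par).

Lemma cross w x s : w != r -> path e x s -> D w x != D w (last x s) ->
  (w \in x :: s) && (par w \in x :: s).
Proof.
move=> Hw; elim: s x => [|y s IH] x /=; first by rewrite eqxx.
move=> /andP[Hxy Hp] Hneq.
case: (eqVneq (D w x) (D w y)) => E.
  have := IH y Hp; rewrite -E => /(_ Hneq) /andP[H1 H2].
  by rewrite in_cons H1 orbT /= in_cons H2 orbT.
move: Hxy E; rewrite /adj => /orP[/andP[Hx /eqP Hpx]|/andP[Hy /eqP Hpy]].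
  rewrite (fcon_step par x w) Hpx; case: (x =P w) => [<-|_] //=.
    by rewrite !in_cons Hpx !eqxx /= orbT.
  by rewrite eqxx.
rewrite (fcon_step par y w) Hpy; case: (y =P w) => [<-|_] //=.
  by rewrite !in_cons Hpy !eqxx /= !orbT.
by rewrite eqxx.
Qed.

Lemma cross_mem w x s u : w != r -> path e x s -> u \in x :: s -> D w x != D w u ->
  (w \in x :: s) && (par w \in x :: s).
Proof.
move=> Hw Hp; rewrite in_cons => /orP[/eqP->|Hu]; first by rewrite eqxx.
move: Hp; case/path.splitP: Hu => p1 p2; rewrite cat_path => /andP[Hp1 _] Hn.
have := cross Hw Hp1; rewrite last_rcons => /(_ Hn) /andP[H1 H2].
by rewrite -cat_cons !mem_cat H1 H2.
Qed.

Lemma side w x s : w != r -> path e x s -> ~~ ((w \in x :: s) && (par w \in x :: s)) ->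
  forall u, u \in x :: s -> D w u = D w x.
Proof.
move=> Hw Hp Hn u Hu; apply/eqP; rewrite eq_sym; apply: contraNT Hn => Hne.
exact: cross_mem Hu Hne.
Qed.

Lemma pathside w x s u : w != r -> path e x s -> uniq (x :: s) -> u \in x :: s ->
  D w x = D w (last x s) -> D w u = D w x.
Proof.
move=> Hw Hp Hun Hu Hl; apply/eqP; rewrite eq_sym; apply/negP => /negP Hne.
move: Hu; rewrite in_cons => /orP[/eqP Eu|Hu]; first by move: Hne; rewrite Eu eqxx.
move: Hp Hun Hl; case/path.splitP: Hu => p1 p2.
rewrite cat_path last_cat last_rcons => /andP[Hp1 Hp2] Hun Hl.
have /andP[A1 A2] : (w \in x :: rcons p1 u) && (par w \in x :: rcons p1 u).
  by apply: cross Hw Hp1 _; rewrite last_rcons.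
have /andP[B1 B2] : (w \in u :: p2) && (par w \in u :: p2).
  by apply: cross Hw Hp2 _; rewrite -Hl eq_sym.
move: Hun; rewrite -cat_cons -rcons_cons cat_uniq => /and3P[_ Hdis _].
rewrite -rcons_cons in A1 A2.
have Hpw : par w != w by exact: (par_neq Hroot Hreach Hw).
have [z [Hz1 Hz2]] : exists z, z \in rcons (x :: p1) u /\ z \in p2.
  move: B1 B2; rewrite !in_cons.
  case: (eqVneq w u) => [Ewu|Hwu] /= B1 B2.
    exists (par w); split => //.
    by move: B2; rewrite -Ewu (negPf Hpw).
  by exists w.
by move: Hdis => /hasPn /(_ z Hz2); rewrite Hz1.
Qed.
End Paths.


Definition sel K (nn : 'I_K -> nat) (b : bool) (y : grp nn) : grp nn := if b then y else g0 nn.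
Definition S4 K (nn : 'I_K -> nat) (a b c d : bool) (x1 x2 x3 x4 : grp nn) : grp nn :=
  gadd (gadd (gadd (sel a x1) (sel b x2)) (sel c x3)) (sel d x4).

Section Zv.
Variables (V : finType) (r : V) (par : V -> V) (K : nat) (nn : 'I_K -> nat).
Local Notation G := (grp nn).
Local Notation Lf := (Leaf r par).

Lemma Sg_single (w t : V) (Ht : is_leaf r par t) (y : G) :
  \big[@gadd K nn/g0 nn]_(x : Lf | fconnect par (val x) w) sel (val x == t) y =
  sel (fconnect par t w) y.
Proof.
case Dt: (fconnect par t w).
  rewrite (bigD1 (exist _ t Ht : Lf)) /=; last by rewrite Dt.
  rewrite /sel eqxx big1 ?gaddg0 // => x /andP[_ Hx]; case: eqP => // E.
  by exfalso; move/eqP: Hx; apply; apply: val_inj.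
rewrite big1 // => x Hx; rewrite /sel; case: eqP => // E.
by rewrite E Dt in Hx.
Qed.

Lemma Sg_zvec (i j i' j' : V) (Hi : is_leaf r par i) (Hj : is_leaf r par j)
  (Hi' : is_leaf r par i') (Hj' : is_leaf r par j')
  (Hij : i != j) (Hii' : i != i') (Hij' : i != j') (Hji' : j != i') (Hjj' : j != j')
  (Hi'j' : i' != j') (x1 x2 x3 x4 : G) (w : V) :
  Sg (zvec r par i j i' j' x1 x2 x3 x4) w =
  S4 (fconnect par i w) (fconnect par j w) (fconnect par i' w) (fconnect par j' w) x1 x2 x3 x4.
Proof.
have Ez : forall x : Lf, zvec r par i j i' j' x1 x2 x3 x4 x =
   S4 (val x == i) (val x == j) (val x == i') (val x == j') x1 x2 x3 x4.
  move=> x; rewrite ffunE /S4 /sel; case: x => y Hy /=.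
  case: eqP => [->|N1]; first by rewrite (negPf Hij) (negPf Hii') (negPf Hij') !gaddg0.
  case: eqP => [->|N2]; first by rewrite (negPf Hji') (negPf Hjj') gadd0g !gaddg0.
  case: eqP => [->|N3]; first by rewrite (negPf Hi'j') !gadd0g gaddg0.
  by rewrite !gadd0g.
rewrite /Sg (eq_bigr _ (fun x _ => Ez x)) /S4 !big_split /=.
by rewrite !Sg_single.
Qed.
End Zv.

Section Vert.
Variables (K : nat) (nn : 'I_K -> nat).
Local Notation G := (grp nn).
Variable lf : G -> R.
Hypothesis Hopp : forall s, lf (gopp s) = lf s.
Hypothesis H0 : lf (g0 nn) = R0.

Lemma vert (h : G) (a b c d : bool) :
  ~~ ((a != b) && (c != d)) -> ((a == b) && (c == d) -> a == c) ->
  Rmult (exp (lf (S4 a b c d h (g0 nn) (gopp h) (g0 nn))))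
        (exp (lf (S4 a b c d (g0 nn) (gopp h) (g0 nn) h))) =
  Rmult (exp (lf (S4 a b c d h (gopp h) (g0 nn) (g0 nn))))
        (exp (lf (S4 a b c d (g0 nn) (g0 nn) (gopp h) h))).
Proof.
case: a; case: b; case: c; case: d => //= H1 H2;
  try (by move: H1); try (by have := H2 isT);
  rewrite /S4 /sel ?gaddg0 ?gadd0g ?gaddN ?gaddNg ?Hopp ?H0 ?exp_0; ring.
Qed.

Lemma vert_v (h : G) (a c : bool) : a != c ->
  Rmult (exp (lf (S4 a a c c h (g0 nn) (gopp h) (g0 nn))))
        (exp (lf (S4 a a c c (g0 nn) (gopp h) (g0 nn) h))) =
  Rmult (Rmult (exp (lf h)) (exp (lf h)))
  (Rmult (exp (lf (S4 a a c c h (gopp h) (g0 nn) (g0 nn))))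
        (exp (lf (S4 a a c c (g0 nn) (g0 nn) (gopp h) h)))).
Proof.
case: a; case: c => //= _;
  rewrite /S4 /sel ?gaddg0 ?gadd0g ?gaddN ?gaddNg ?Hopp ?H0 ?exp_0; ring.
Qed.
End Vert.

Lemma Cdiv_RtoC (x y : R) : y <> R0 -> Cdiv (RtoC x) (RtoC y) = RtoC (Rdiv x y).
Proof.
move=> Hy; rewrite /Cdiv /Cinv /Cmul /RtoC /=; apply: Cext => /=; field; exact: Hy.
Qed.

Lemma prod_exp_pos (V : finType) (P : pred V) (F : V -> R) :
  Rlt R0 (\big[Rmult/R1]_(w | P w) exp (F w)).
Proof.
apply: (big_ind (fun x => Rlt R0 x)); first exact: Rlt_0_1.
  by move=> x y; apply: Rmult_lt_0_compat.
by move=> w _; apply: exp_pos.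
Qed.

Lemma last_uniq_nil (T : eqType) (x : T) s : uniq (x :: s) -> last x s = x -> s = [::].
Proof.
case: s => // y s /= /andP[Hx _] Hl; exfalso; move: Hx; rewrite -Hl.
by rewrite mem_last.
Qed.

Theorem mainTheorem6
  (K : nat) (nn : 'I_K -> nat)
  (V : finType) (r : V) (par : V -> V)
  (Htree : is_rooted_tree r par)
  (Hroot_leaf : is_leaf r par r)
  (psi : V -> grp nn -> R)
  (Hpsi_sum : forall v, v != r -> \big[Rplus/R0]_(g : grp nn) psi v g = R0)
  (Hpsi_sym : forall v, v != r -> forall g, psi v g = psi v (gopp g))
  (P : V -> grp nn -> grp nn -> R)
  (HP : forall v, v != r -> is_mexp (fun g h => psi v (gsub h g)) (P v))
  (v : V) (Hint : internal_edge r par v)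
  (nu nu' : V)
  (Hends : (nu = par v /\ nu' = v) \/ (nu = v /\ nu' = par v))
  (i j i' j' : V)
  (Hi : is_leaf r par i) (Hj : is_leaf r par j)
  (Hi' : is_leaf r par i') (Hj' : is_leaf r par j')
  (Hij : on_path r par i j nu /\ ~ on_path r par i j nu')
  (Hij' : on_path r par i' j' nu' /\ ~ on_path r par i' j' nu)
  (h : grp nn) :
  let z := zvec r par i j i' j' in
  let q := qF r par P in
  let o := g0 nn in
  let mh := gopp h in
  Cmul (q (z h mh o o)) (q (z o o mh h)) <> C0 /\
  Cmul (fourier (fedge P v) h) (fourier (fedge P v) h) =
  Cdiv (Cmul (q (z h o mh o)) (q (z o mh o h)))
       (Cmul (q (z h mh o o)) (q (z o o mh h))).
Proof.
move=> z q o mh; rewrite {}/z {}/q {}/o {}/mh.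
case: Htree => Hroot Hreach.
move: Hint; rewrite /internal_edge => /and3P[Hvr Hvl Hpvl].
have Pshift : forall w, w != r -> forall a b, P w a b = P w (g0 nn) (gsub b a).
  by move=> w Hw a b; apply: P_shift (HP w Hw) a b.
pose E w s := exp (lam (psi w) s).
have Fw : forall w, w != r -> forall s, fourier (fedge P w) s = RtoC (E w s).
  by move=> w Hw s; apply: (fourier_P (Hpsi_sym w Hw) (HP w Hw)).
pose Pi (g : {ffun Leaf r par -> grp nn}) := \big[Rmult/R1]_(w | w != r) E w (@Sg V r par K nn g w).
have Hq : forall g, qF r par P g = RtoC (Pi g).
  move=> g; rewrite (qF_prod Hroot Hreach Pshift) /Pi RtoC_prod.
  by apply: eq_bigr => w Hw; rewrite Fw.
case: Hij => [[s [Hs1 Hs2 Hs3 Hs4]] Hn1].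
case: Hij' => [[s' [Hs1' Hs2' Hs3' Hs4']] Hn2].
have Hnu1 : nu' \notin i :: s by apply/negP => H; apply: Hn1; exists s.
have Hnu2 : nu \notin i' :: s' by apply/negP => H; apply: Hn2; exists s'.
have Dvv : fconnect par v v by apply: connect0.
have Dpv : ~~ fconnect par (par v) v by apply: (fcon_par_not Hroot Hreach Hvr).
have Hnd : fconnect par nu v != fconnect par nu' v.
  by case: Hends => [[-> ->]|[-> ->]]; rewrite Dvv (negPf Dpv).
have NB1 : ~~ ((v \in i :: s) && (par v \in i :: s)).
  by case: Hends => [[_ Ee]|[_ Ee]]; move: Hnu1; rewrite Ee => /negPf ->; rewrite ?andbF.
have NB2 : ~~ ((v \in i' :: s') && (par v \in i' :: s')).
  by case: Hends => [[Ee _]|[Ee _]]; move: Hnu2; rewrite Ee => /negPf ->; rewrite ?andbF.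
have Sd1 := side Hvr Hs1 NB1.
have Sd2 := side Hvr Hs1' NB2.
have Hlast1 : j \in i :: s by rewrite -Hs2 mem_last.
have Hlast2 : j' \in i' :: s' by rewrite -Hs2' mem_last.
have Dii' : fconnect par i v != fconnect par i' v by rewrite -(Sd1 _ Hs4) -(Sd2 _ Hs4').
have Dj : fconnect par j v = fconnect par i v by apply: Sd1.
have Dj' : fconnect par j' v = fconnect par i' v by apply: Sd2.
have nu_nl : ~~ is_leaf r par nu by case: Hends => [[-> _]|[-> _]].
have nu'_nl : ~~ is_leaf r par nu' by case: Hends => [[_ ->]|[_ ->]].
have Hij0 : i != j.
  apply/eqP => Ee; move: Hs2 Hs4; rewrite -Ee => Hl; rewrite (last_uniq_nil Hs3 Hl).
  by rewrite inE => /eqP En; move: nu_nl; rewrite En Hi.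
have Hij0' : i' != j'.
  apply/eqP => Ee; move: Hs2' Hs4'; rewrite -Ee => Hl; rewrite (last_uniq_nil Hs3' Hl).
  by rewrite inE => /eqP En; move: nu'_nl; rewrite En Hi'.
have Hii' : i != i' by apply: contraNneq Dii' => ->.
have Hij' : i != j' by apply: contraNneq Dii' => ->; rewrite Dj'.
have Hji' : j != i' by apply: contraNneq Dii' => Ee; rewrite -Dj Ee.
have Hjj' : j != j' by apply: contraNneq Dii' => Ee; rewrite -Dj Ee Dj'.
have SZ := Sg_zvec Hi Hj Hi' Hj' Hij0 Hii' Hij' Hji' Hjj' Hij0'.
have C1w : forall w, w != r ->
   ~~ ((fconnect par i w != fconnect par j w) && (fconnect par i' w != fconnect par j' w)).
  move=> w Hw; apply/negP => /andP[N1 N2].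
  have /andP[W1 _] := cross_mem Hw Hs1 Hlast1 N1.
  have /andP[W2 _] := cross_mem Hw Hs1' Hlast2 N2.
  by move: Dii'; rewrite -(Sd1 _ W1) -(Sd2 _ W2) eqxx.
have C2w : forall w, w != r -> w != v ->
   (fconnect par i w == fconnect par j w) && (fconnect par i' w == fconnect par j' w) ->
   fconnect par i w == fconnect par i' w.
  move=> w Hw Hwv /andP[/eqP E1 /eqP E2].
  have A1 : fconnect par nu w = fconnect par i w.
    by apply: (pathside Hroot Hreach Hw Hs1 Hs3 Hs4); rewrite Hs2.
  have A2 : fconnect par nu' w = fconnect par i' w.
    by apply: (pathside Hroot Hreach Hw Hs1' Hs3' Hs4'); rewrite Hs2'.
  have Hvw : fconnect par v w = fconnect par (par v) w.
    by rewrite (fcon_step par v w) eq_sym (negPf Hwv).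
  by rewrite -A1 -A2; case: Hends => [[-> ->]|[-> ->]]; rewrite Hvw.
have Hpos : forall g, Rlt R0 (Pi g) by move=> g; apply: prod_exp_pos.
set N1 := zvec r par i j i' j' h (g0 nn) (gopp h) (g0 nn).
set N2 := zvec r par i j i' j' (g0 nn) (gopp h) (g0 nn) h.
set D1 := zvec r par i j i' j' h (gopp h) (g0 nn) (g0 nn).
set D2 := zvec r par i j i' j' (g0 nn) (g0 nn) (gopp h) h.
have Key : Rmult (Pi N1) (Pi N2) = Rmult (Rmult (E v h) (E v h)) (Rmult (Pi D1) (Pi D2)).
  have Hb : \big[Rmult/R1]_(w | (w != r) && (w != v)) Rmult (E w (Sg N1 w)) (E w (Sg N2 w)) =
            \big[Rmult/R1]_(w | (w != r) && (w != v)) Rmult (E w (Sg D1 w)) (E w (Sg D2 w)).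
    apply: eq_bigr => w /andP[Hw Hwv]; rewrite !SZ.
    apply: vert; first exact: (lam_opp (Hpsi_sym w Hw)); first exact: (lam0 (Hpsi_sum w Hw)).
      exact: C1w.
    exact: C2w.
  rewrite /Pi -!big_split /= (bigD1 v) //= [in RHS](bigD1 v) //= Hb.
  rewrite !SZ Dj Dj'.
  unfold E; rewrite vert_v; last exact: Dii'.
  2: exact: (lam_opp (Hpsi_sym v Hvr)).
  2: exact: (lam0 (Hpsi_sum v Hvr)).
  ring.
rewrite !Hq Fw // -!RtoC_mul.
split.
  move=> H; have := congr1 fst H => /= H'.
  have := Rmult_lt_0_compat _ _ (Hpos D1) (Hpos D2); rewrite H' => /Rlt_irrefl //.
rewrite Cdiv_RtoC; last by apply: Rgt_not_eq; apply: Rmult_lt_0_compat.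
congr RtoC; rewrite Key; field.
split; apply: Rgt_not_eq; exact: Hpos.
Qed.
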